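(* Let $n\ge0$ be an integer and let $B^*$ be the unique positive zero of $B\mapsto(2n+1)-BF'_{2n+1}(B)/F_{2n+1}(B)$. Then $B^*\ge\sqrt{n}$.
   Context: For $q>0$, $F_q(y):=\int_0^\infty u^{q-1}e^{yu-u^2/2}\,\mathrm{d}u$ for $y\in\mathbb{R}$. It is known that the function $B\mapsto(2n+1)-BF'_{2n+1}(B)/F_{2n+1}(B)$ is strictly decreasing with a unique zero $B^*>0$. Moreover, $\frac{\partial}{\partial B}\frac{B^{2n+1}}{F_{2n+1}(B)}>0$ if and only if $B<B^*$. *)

(* Defs.v *)
From Stdlib Require Import Reals.
From Coquelicot Require Import Coquelicot.
Open Scope R_scope.

(* F_q(y) := \int_0^\infty u^(q-1) e^(y u - u^2/2) du  (improper Riemann integral).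
   u^(q-1) is Rpower u (q-1) (the value at the single point u = 0 is irrelevant). *)
Definition F (q y : R) : R :=
  RInt_gen (fun u => Rpower u (q - 1) * exp (y * u - u ^ 2 / 2))
           (at_point 0) (Rbar_locally p_infty).

(* Main.v *)
Require Import Defs.
From Stdlib Require Import Reals Lra Psatz.
From Coquelicot Require Import Coquelicot.
Open Scope R_scope.

Definition g (k : nat) (y u : R) : R := u ^ k * exp (y * u - u ^ 2 / 2).

Lemma g_cont k y x : continuous (g k y) x.
Proof. apply (@ex_derive_continuous R_AbsRing R_NormedModule). unfold g. auto_derive. auto. Qed.

Lemma x_le_exp x : x <= exp x.
Proof.
  destruct (Req_dec x 0) as [->|H]. rewrite exp_0; lra.
  pose proof (exp_ineq1 x H); lra.
Qed.

Lemma exp_le x y : x <= y -> exp x <= exp y.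
Proof. intros [H|H]. left; apply exp_increasing; auto. rewrite H; lra. Qed.

Lemma pow_le_exp k x : 0 <= x -> x ^ k <= exp (INR k * x).
Proof.
  intros Hx. induction k as [|k IH].
  - simpl. rewrite Rmult_0_l, exp_0. lra.
  - rewrite S_INR. replace ((INR k + 1) * x) with (x + INR k * x) by ring.
    rewrite exp_plus. simpl. apply Rmult_le_compat; auto. apply pow_le; auto.
    apply x_le_exp.
Qed.

Lemma g_bound k y : exists C, forall x, 0 <= x -> Rabs (g k y x) <= C * exp (- x).
Proof.
  exists (exp ((INR k + y + 1)^2 / 2)). intros x Hx. unfold g.
  rewrite Rabs_mult, (Rabs_right (exp _)) by (left; apply exp_pos).
  rewrite Rabs_right by (apply Rle_ge, pow_le; auto).
  apply Rle_trans with (exp (INR k * x) * exp (y * x - x ^ 2 / 2)).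
  apply Rmult_le_compat_r. left; apply exp_pos. apply pow_le_exp; auto.
  rewrite <- !exp_plus. apply exp_le.
  assert (0 <= (x - (INR k + y + 1))^2) by apply pow2_ge_0. nra.
Qed.

Lemma exRc (f : R -> R) a b : (forall x, continuous f x) -> ex_RInt f a b.
Proof. intros H. apply (@ex_RInt_continuous R_CompleteNormedModule). intros; apply H. Qed.

Lemma is_RInt_gen_lim (f : R -> R) L : (forall b, ex_RInt f 0 b) ->
  filterlim (fun b => RInt f 0 b) (Rbar_locally p_infty) (locally L) ->
  is_RInt_gen f (at_point 0) (Rbar_locally p_infty) L.
Proof.
  intros Hex Hlim P HP.
  apply (Filter_prod _ _ _ (fun a => a = 0) (fun b => P (RInt f 0 b))).
  - reflexivity.
  - apply Hlim; exact HP.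
  - intros a b Ha Hb; simpl; subst. exists (RInt f 0 b); split; auto.
    apply (@RInt_correct R_CompleteNormedModule); auto.
Qed.

Lemma tail_bound f C u v : (forall x, continuous f x) ->
  (forall x, 0 <= x -> Rabs (f x) <= C * exp (- x)) -> 0 <= u <= v ->
  Rabs (RInt f u v) <= C * exp (- u).
Proof.
  intros Hc Hb Huv.
  assert (HI : is_RInt (fun x => C * exp (- x)) u v (C * exp (-u) - C * exp (- v))).
  { replace (C * exp (-u) - C * exp (- v)) with (minus (- C * exp (-v)) (- C * exp (- u)))
      by (unfold minus, plus, opp; simpl; ring).
    apply (is_RInt_derive (fun x => - C * exp (- x))).
    - intros x _. auto_derive; auto. ring.
    - intros x _. apply (@ex_derive_continuous R_AbsRing R_NormedModule). auto_derive; auto. }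
  eapply Rle_trans. apply abs_RInt_le. lra. apply exRc; auto.
  eapply Rle_trans. apply RInt_le with (g := fun x => C * exp (- x)). lra.
  apply exRc. intros z. apply (continuous_comp f Rabs). auto. apply continuous_Rabs.
  eexists; exact HI.
  intros x Hx. apply Hb. lra.
  rewrite (is_RInt_unique _ _ _ _ HI). assert (0 < exp (- v)) by apply exp_pos.
  assert (0 <= C). { eapply Rle_trans. apply Rabs_pos. eapply Rle_trans. apply (Hb 0). lra. rewrite Ropp_0, exp_0. lra. }
  nra.
Qed.

Lemma conv f C : (forall x, continuous f x) ->
  (forall x, 0 <= x -> Rabs (f x) <= C * exp (- x)) ->
  exists L, is_RInt_gen f (at_point 0) (Rbar_locally p_infty) L.
Proof.
  intros Hc Hb.
  assert (HC : 0 <= C). { eapply Rle_trans. apply Rabs_pos. eapply Rle_trans. apply (Hb 0). lra. rewrite Ropp_0, exp_0. lra. }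
  destruct (proj1 (@filterlim_locally_cauchy R R_CompleteSpace (Rbar_locally p_infty) (Rbar_locally_filter p_infty) (fun b => RInt f 0 b))) as [L HL].
  - intros eps. exists (fun u => C / eps < u). split.
    + exists (C / eps). auto.
    + assert (key : forall u v, C / eps < u -> u <= v -> Rabs (RInt f 0 v - RInt f 0 u) < eps).
      { intros u v Hu Huv.
        assert (He : 0 < eps) by apply cond_pos.
        assert (0 <= C / eps) by (apply Rdiv_le_0_compat; lra).
        rewrite <- (RInt_Chasles f 0 u v) by (apply exRc; auto).
        assert (E: plus (RInt f 0 u) (RInt f u v) = RInt f 0 u + RInt f u v) by reflexivity. rewrite E.
        assert (E2 : forall a b : R, a + b - a = b) by (intros; ring). rewrite E2.
        eapply Rle_lt_trans. apply tail_bound; auto. lra.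
        rewrite exp_Ropp. pose proof (exp_ineq1_le u). pose proof (exp_pos u).
        apply Rmult_lt_reg_r with (exp u); auto. rewrite Rmult_assoc, Rinv_l by lra.
        apply Rmult_lt_compat_l with (r := eps) in Hu; auto.
        unfold Rdiv in Hu. rewrite <- Rmult_assoc, (Rmult_comm eps C), Rmult_assoc, Rinv_r in Hu by lra. nra. }
      intros u v Hu Hv. unfold ball; simpl; unfold AbsRing_ball, abs, minus, plus, opp; simpl.
      destruct (Rle_dec u v).
      * apply key; auto.
      * rewrite <- Rabs_Ropp. replace (- (RInt f 0 v + - RInt f 0 u)) with (RInt f 0 u - RInt f 0 v) by ring.
        apply key; auto. lra.
  - exists L. apply is_RInt_gen_lim. intros; apply exRc; auto. exact HL.
Qed.

Definition G k y := RInt_gen (g k y) (at_point 0) (Rbar_locally p_infty).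

Lemma G_correct k y : is_RInt_gen (g k y) (at_point 0) (Rbar_locally p_infty) (G k y).
Proof.
  destruct (g_bound k y) as [C HC].
  destruct (conv (g k y) C (g_cont k y) HC) as [L HL].
  unfold G. rewrite (is_RInt_gen_unique _ _ HL). exact HL.
Qed.

Lemma F_eq n y : F (INR (2 * n + 1)) y = G (2 * n) y.
Proof.
  unfold F. apply is_RInt_gen_unique.
  apply (is_RInt_gen_ext (g (2 * n) y)); [| apply G_correct].
  apply (Filter_prod _ _ _ (fun a => a = 0) (fun b => 0 < b)).
  - reflexivity.
  - exists 0. auto.
  - intros a b Ha Hb x Hx; cbn [fst snd] in *; subst.
    rewrite Rmin_left, Rmax_right in Hx by lra.
    unfold g. rewrite plus_INR. replace (INR (2 * n) + INR 1 - 1) with (INR (2 * n)) by (simpl; ring).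
    rewrite Rpower_pow by lra. reflexivity.
Qed.

Notation Fa := (at_point 0).
Notation Fb := (Rbar_locally p_infty).

Lemma lin3 (f1 f2 f3 : R -> R) (l1 l2 l3 a b c : R) :
  is_RInt_gen f1 Fa Fb l1 -> is_RInt_gen f2 Fa Fb l2 -> is_RInt_gen f3 Fa Fb l3 ->
  is_RInt_gen (fun u => a * f1 u + b * f2 u + c * f3 u) Fa Fb (a * l1 + b * l2 + c * l3).
Proof.
  intros H1 H2 H3.
  apply (is_RInt_gen_plus _ _ _ _ (is_RInt_gen_plus _ _ _ _ (is_RInt_gen_scal _ a _ H1) (is_RInt_gen_scal _ b _ H2)) (is_RInt_gen_scal _ c _ H3)).
Qed.

Lemma uniq (f : R -> R) (l1 l2 : R) : is_RInt_gen f Fa Fb l1 -> is_RInt_gen f Fa Fb l2 -> l1 = l2.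
Proof. intros H1 H2. rewrite <- (is_RInt_gen_unique _ _ H1). apply is_RInt_gen_unique; auto. Qed.

Lemma ext (f h : R -> R) (l : R) : (forall x, f x = h x) -> is_RInt_gen f Fa Fb l -> is_RInt_gen h Fa Fb l.
Proof.
  intros E H. apply (is_RInt_gen_ext f); auto.
  apply (Filter_prod _ _ _ (fun _ => True) (fun _ => True)). reflexivity. simpl. exists 0; auto. intros; apply E.
Qed.

Lemma lim_inf_0 (h : R -> R) C : (forall x, 0 <= x -> Rabs (h x) <= C * exp (- x)) ->
  filterlim h Fb (locally 0).
Proof.
  intros Hb P [eps HP].
  assert (He : 0 < eps) by apply cond_pos.
  assert (HC : 0 <= C). { eapply Rle_trans. apply Rabs_pos. eapply Rle_trans. apply (Hb 0). lra. rewrite Ropp_0, exp_0. lra. }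
  exists (C / eps). intros u Hu. apply HP.
  assert (0 <= C / eps) by (apply Rdiv_le_0_compat; lra).
  unfold ball; simpl; unfold AbsRing_ball, abs, minus, plus, opp; simpl.
  rewrite Ropp_0, Rplus_0_r.
  eapply Rle_lt_trans. apply Hb. lra.
  rewrite exp_Ropp. pose proof (exp_ineq1_le u). pose proof (exp_pos u).
  apply Rmult_lt_reg_r with (exp u); auto. rewrite Rmult_assoc, Rinv_l by lra.
  apply Rmult_lt_compat_l with (r := eps) in Hu; auto.
  unfold Rdiv in Hu. rewrite <- Rmult_assoc, (Rmult_comm eps C), Rmult_assoc, Rinv_r in Hu by lra. nra.
Qed.

Lemma ibp k y : INR (k + 1) * G k y + y * G (k + 1) y + (-1) * G (k + 2) y = 0.
Proof.
  set (H := fun u => u ^ (k + 1) * exp (y * u - u ^ 2 / 2)).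
  assert (dH : forall u : R, is_derive H u (INR (k + 1) * g k y u + y * g (k + 1) y u + (-1) * g (k + 2) y u)).
  { intros u. unfold H, g. auto_derive; auto.
    replace (k + 1)%nat with (S k) by lia. replace (k + 2)%nat with (S (S k)) by lia.
    replace (y * u + - (u * (u * 1) * / 2)) with (y*u - u^2/2) by (unfold Rminus, Rdiv; ring). cbn [Init.Nat.pred pow]. field. }
  assert (Hd : forall u, Derive H u = INR (k + 1) * g k y u + y * g (k + 1) y u + (-1) * g (k + 2) y u).
  { intros u; apply is_derive_unique; auto. }
  apply (uniq (fun u => INR (k + 1) * g k y u + y * g (k + 1) y u + (-1) * g (k + 2) y u)).
  - apply lin3; apply G_correct.
  - assert (h : is_RInt_gen (Derive H) Fa Fb (0 - 0)).
    2:{ rewrite Rminus_0_r in h. apply (ext (Derive H)); auto. }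
    apply is_RInt_gen_Derive.
    + apply (Filter_prod _ _ _ (fun _ => True) (fun _ => True)); [reflexivity | simpl; exists 0; auto | ].
      intros; eexists; apply dH.
    + apply (Filter_prod _ _ _ (fun _ => True) (fun _ => True)); [reflexivity | simpl; exists 0; auto | ].
      intros a b _ _ x _. apply (continuous_ext (fun u => INR (k + 1) * g k y u + y * g (k + 1) y u + (-1) * g (k + 2) y u)).
      intros; symmetry; apply Hd.
      apply (@ex_derive_continuous R_AbsRing R_NormedModule). unfold g. auto_derive. auto.
    + intros P HP. unfold filtermap, at_point. replace (H 0) with 0.
      apply locally_singleton; auto. unfold H. rewrite pow_i by lia. ring.
    + destruct (g_bound (k + 1) y) as [C HC]. apply (lim_inf_0 _ C). exact HC.
Qed.

Lemma nonneg (h : R -> R) (l : R) : (forall x, 0 <= x -> 0 <= h x) -> is_RInt_gen h Fa Fb l -> 0 <= l.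
Proof.
  intros Hp H.
  assert (Hn : norm l <= l).
  { apply (@RInt_gen_norm R_CompleteNormedModule Fa Fb _ _ h h l l).
    - apply (Filter_prod _ _ _ (fun a => a = 0) (fun b => 0 < b)); [reflexivity | simpl; exists 0; auto | ].
      intros a b Ha Hb; cbn [fst snd]; subst; lra.
    - apply (Filter_prod _ _ _ (fun a => a = 0) (fun b => 0 < b)); [reflexivity | simpl; exists 0; auto | ].
      intros a b Ha Hb x Hx; cbn [fst snd] in *; subst.
      unfold norm; simpl; unfold abs; simpl. rewrite Rabs_right. lra. apply Rle_ge, Hp. lra.
    - exact H.
    - exact H. }
  unfold norm in Hn; simpl in Hn; unfold abs in Hn; simpl in Hn.
  pose proof (Rabs_pos l). lra.
Qed.

Lemma G_nonneg k y : 0 <= G k y.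
Proof.
  apply (nonneg (g k y)). intros x Hx. unfold g. apply Rmult_le_pos. apply pow_le; auto. left; apply exp_pos.
  apply G_correct.
Qed.

Lemma quad k y d : 0 <= d ^ 2 * G k y + (-2 * d) * G (k + 1) y + 1 * G (k + 2) y.
Proof.
  apply (nonneg (fun u => d ^ 2 * g k y u + (-2 * d) * g (k + 1) y u + 1 * g (k + 2) y u)).
  - intros x Hx. unfold g.
    replace (d ^ 2 * (x ^ k * exp (y * x - x ^ 2 / 2)) + -2 * d * (x ^ (k + 1) * exp (y * x - x ^ 2 / 2)) +
       1 * (x ^ (k + 2) * exp (y * x - x ^ 2 / 2))) with ((x - d) ^ 2 * (x ^ k * exp (y * x - x ^ 2 / 2))).
    + apply Rmult_le_pos. apply pow2_ge_0. apply Rmult_le_pos. apply pow_le; auto. left; apply exp_pos.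
    + rewrite !pow_add. simpl. ring.
  - apply lin3; apply G_correct.
Qed.

Lemma mvt0 (f f' : R -> R) t : (forall c, derivable_pt_lim f c (f' c)) ->
  exists c, Rabs c <= Rabs t /\ f t - f 0 = f' c * t.
Proof.
  intros Hd. destruct (Rtotal_order t 0) as [Ht|[Ht|Ht]].
  - destruct (MVT_cor2 f f' t 0 Ht (fun c _ => Hd c)) as [c [E Hc]].
    exists c. split. rewrite !Rabs_left by lra. lra. lra.
  - subst. exists 0. split. lra. ring.
  - destruct (MVT_cor2 f f' 0 t Ht (fun c _ => Hd c)) as [c [E Hc]].
    exists c. split. rewrite !Rabs_right by lra. lra. lra.
Qed.

Lemma exp_abs_mono a b : Rabs a <= Rabs b -> exp a <= exp (Rabs b).
Proof. intros H. apply exp_le. pose proof (Rle_abs a). lra. Qed.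

Lemma exp_m1 s : Rabs (exp s - 1) <= Rabs s * exp (Rabs s).
Proof.
  destruct (mvt0 exp exp s derivable_pt_lim_exp) as [c [Hc E]].
  rewrite exp_0 in E. rewrite E, Rabs_mult, (Rabs_right (exp c)) by (left; apply exp_pos).
  rewrite Rmult_comm. apply Rmult_le_compat_l. apply Rabs_pos. apply exp_abs_mono; auto.
Qed.

Lemma exp_m2 t : Rabs (exp t - 1 - t) <= t ^ 2 * exp (Rabs t).
Proof.
  destruct (mvt0 (fun s => exp s - 1 - s) (fun s => exp s - 1) t) as [c [Hc E]].
  { intros c. apply is_derive_Reals. auto_derive; auto. ring. }
  replace (exp 0 - 1 - 0) with 0 in E by (rewrite exp_0; ring). rewrite Rminus_0_r in E.
  rewrite E, Rabs_mult. pose proof (exp_m1 c).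
  apply Rle_trans with (Rabs c * exp (Rabs c) * Rabs t).
  apply Rmult_le_compat_r; auto. apply Rabs_pos.
  assert (exp (Rabs c) <= exp (Rabs t)) by (apply exp_le; auto).
  pose proof (Rabs_pos c). pose proof (exp_pos (Rabs c)). pose proof (Rabs_pos t).
  replace (t ^ 2) with (Rabs t * Rabs t) by (unfold Rabs; destruct (Rcase_abs t); ring).
  apply Rle_trans with (Rabs t * exp (Rabs c) * Rabs t).
  apply Rmult_le_compat_r; [apply Rabs_pos|]; apply Rmult_le_compat_r; [lra|exact Hc].
  replace (Rabs t * exp (Rabs c) * Rabs t) with ((Rabs t * Rabs t) * exp (Rabs c)) by ring.
  apply Rmult_le_compat_l; auto. nra.
Qed.

Lemma pt_bound k y0 h x : Rabs h <= 1 -> 0 <= x ->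
  Rabs (1 * g k (y0 + h) x + (-1) * g k y0 x + (- h) * g (k + 1) y0 x) <= h ^ 2 * g (k + 2) (y0 + 1) x.
Proof.
  intros Hh Hx. unfold g.
  set (E := exp (y0 * x - x ^ 2 / 2)).
  assert (E1 : exp ((y0 + h) * x - x ^ 2 / 2) = E * exp (h * x)).
  { unfold E. rewrite <- exp_plus. f_equal. ring. }
  assert (E2 : exp ((y0 + 1) * x - x ^ 2 / 2) = E * exp x).
  { unfold E. rewrite <- exp_plus. f_equal. ring. }
  rewrite E1, E2.
  replace (1 * (x ^ k * (E * exp (h * x))) + -1 * (x ^ k * E) + - h * (x ^ (k + 1) * E))
    with ((x ^ k * E) * (exp (h * x) - 1 - h * x)) by (rewrite pow_add; simpl; ring).
  assert (HE : 0 < E) by apply exp_pos.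
  assert (Hxk : 0 <= x ^ k) by (apply pow_le; auto).
  rewrite Rabs_mult, (Rabs_right (x ^ k * E)) by (apply Rle_ge, Rmult_le_pos; lra).
  apply Rle_trans with ((x ^ k * E) * ((h * x) ^ 2 * exp (Rabs (h * x)))).
  apply Rmult_le_compat_l. apply Rmult_le_pos; lra. apply exp_m2.
  assert (exp (Rabs (h * x)) <= exp x).
  { apply exp_le. rewrite Rabs_mult, (Rabs_right x) by lra. pose proof (Rabs_pos h). nra. }
  rewrite pow_add. replace ((h * x) ^ 2) with (h ^ 2 * x ^ 2) by ring.
  assert (0 <= h ^ 2 * x ^ 2) by (apply Rmult_le_pos; apply pow2_ge_0).
  assert (0 <= x ^ k * E) by (apply Rmult_le_pos; lra).
  replace (h ^ 2 * (x ^ k * x ^ 2 * (E * exp x))) with ((x ^ k * E) * (h ^ 2 * x ^ 2 * exp x)) by ring.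
  apply Rmult_le_compat_l; auto. apply Rmult_le_compat_l; auto.
Qed.

Lemma err k y0 h : Rabs h <= 1 ->
  Rabs (1 * G k (y0 + h) + (-1) * G k y0 + (- h) * G (k + 1) y0) <= h ^ 2 * G (k + 2) (y0 + 1).
Proof.
  intros Hh.
  apply (@RInt_gen_norm R_CompleteNormedModule Fa Fb _ _
    (fun u => 1 * g k (y0 + h) u + (-1) * g k y0 u + (- h) * g (k + 1) y0 u)
    (fun u => h ^ 2 * g (k + 2) (y0 + 1) u)).
  - apply (Filter_prod _ _ _ (fun a => a = 0) (fun b => 0 < b)); [reflexivity | simpl; exists 0; auto | ].
    intros a b Ha Hb; cbn [fst snd]; subst; lra.
  - apply (Filter_prod _ _ _ (fun a => a = 0) (fun b => 0 < b)); [reflexivity | simpl; exists 0; auto | ].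
    intros a b Ha Hb x Hx; cbn [fst snd] in *; subst.
    unfold norm; simpl; unfold abs; simpl. apply pt_bound; auto. lra.
  - apply lin3; apply G_correct.
  - apply (is_RInt_gen_scal _ (h ^ 2) _ (G_correct (k + 2) (y0 + 1))).
Qed.

Lemma G_deriv k y0 : is_derive (G k) y0 (G (k + 1) y0).
Proof.
  apply is_derive_Reals. intros eps Heps.
  set (K := G (k + 2) (y0 + 1)).
  assert (HK : 0 <= K) by apply G_nonneg.
  assert (Hd : 0 < Rmin 1 (eps / (K + 1))).
  { apply Rmin_pos. lra. apply Rdiv_lt_0_compat; lra. }
  exists (mkposreal _ Hd). intros h Hh0 Hh. simpl in Hh.
  assert (H1 : Rabs h <= 1) by (pose proof (Rmin_l 1 (eps / (K + 1))); lra).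
  assert (H2 : Rabs h < eps / (K + 1)) by (pose proof (Rmin_r 1 (eps / (K + 1))); lra).
  pose proof (err k y0 h H1) as He. fold K in He.
  assert (Hpos : 0 < Rabs h) by (apply Rabs_pos_lt; auto).
  replace ((G k (y0 + h) - G k y0) / h - G (k + 1) y0)
    with ((1 * G k (y0 + h) + (-1) * G k y0 + (- h) * G (k + 1) y0) / h) by (field; auto).
  unfold Rdiv. rewrite Rabs_mult, Rabs_inv.
  apply Rmult_lt_reg_r with (Rabs h); auto.
  rewrite Rmult_assoc, Rinv_l by lra.
  replace (h ^ 2) with (Rabs h * Rabs h) in He by (unfold Rabs; destruct (Rcase_abs h); ring).
  apply Rmult_lt_compat_r with (r := K + 1) in H2; [|lra].
  unfold Rdiv in H2. rewrite Rmult_assoc, Rinv_l, Rmult_1_r in H2 by lra.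
  nra.
Qed.

Theorem lemma2p1 (n : nat) (B : R) :
  0 < B ->
  INR (2 * n + 1) - B * Derive (F (INR (2 * n + 1))) B / F (INR (2 * n + 1)) B = 0 ->
  sqrt (INR n) <= B.
Proof.
  intros HB Hyp.
  rewrite (Derive_ext _ (G (2 * n)) B (F_eq n)) in Hyp.
  rewrite (is_derive_unique _ _ _ (G_deriv (2 * n) B)) in Hyp.
  rewrite F_eq in Hyp.
  set (q := INR (2 * n + 1)) in *.
  set (a := G (2 * n) B) in *.
  set (b := G (2 * n + 1) B) in *.
  pose proof (ibp (2 * n) B) as Hibp. fold q a b in Hibp.
  set (c := G (2 * n + 2) B) in *.
  pose proof (G_nonneg (2 * n) B) as Ha. fold a in Ha.
  assert (Hq : q = 2 * INR n + 1) by (unfold q; rewrite plus_INR, mult_INR; simpl; ring).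
  assert (Hn : 0 <= INR n) by apply pos_INR.
  assert (Ha0 : a <> 0).
  { intros E. rewrite E in Hyp. unfold Rdiv in Hyp. rewrite Rinv_0 in Hyp. lra. }
  assert (Hab : B * b = q * a).
  { assert (Hq' : B * b / a = q) by lra. rewrite <- Hq'. field. auto. }
  assert (Hapos : 0 < a) by lra.
  assert (Hbpos : 0 < b).
  { apply Rmult_lt_reg_l with B; auto. rewrite Hab. nra. }
  pose proof (quad (2 * n) B (q / B)) as Hquad. fold a in Hquad.
  replace (2 * n + 1)%nat with (2 * n + 1)%nat in Hquad by reflexivity. fold b c in Hquad.
  assert (Hc : c = 2 * B * b) by lra.
  assert (Hkey : 0 <= b * (2 * B * B - q)).
  { assert (E : (q / B) ^ 2 * a + -2 * (q / B) * b + 1 * c = (b * (2 * B * B - q)) / B).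
    { rewrite Hc. replace ((q / B) ^ 2 * a) with (q * (q * a) / (B * B)) by (field; lra).
      rewrite <- Hab. field. lra. }
    rewrite E in Hquad.
    assert (0 < / B) by (apply Rinv_0_lt_compat; auto).
    unfold Rdiv in Hquad. 
    apply Rmult_le_compat_r with (r := B) in Hquad; [| lra].
    replace (b * (2 * B * B - q) * / B * B) with (b * (2 * B * B - q)) in Hquad by (field; lra).
    lra. }
  assert (HB2 : INR n <= B * B) by nra.
  rewrite <- (sqrt_square B) by lra. apply sqrt_le_1_alt. exact HB2.
Qed.
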